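(* Let $(\mathcal A,\varphi,\mathcal F,\Phi)$ be a ncps of type B$'$ with associated infinitesimal ncps $(\mathcal B,\varphi,\varphi')$. Let $(\mathcal A_i)_{i\in I}$ be subalgebras of $\mathcal A$ containing $1_{\mathcal A}$ and $(\mathcal F_i)_{i\in I}$ subalgebras of $\mathcal F$, indexed by the same set $I$. Let $\mathcal B_i$ be the subalgebra of $\mathcal B$ generated by $\mathcal A_i\oplus\{0_{\mathcal F}\}$ and $\mathbb C1_{\mathcal A}\oplus\mathcal F_i$. If $(\mathcal A_i,\mathcal F_i)_{i\in I}$ is B$'$-free in $(\mathcal A,\varphi,\mathcal F,\Phi)$, then $(\mathcal B_i)_{i\in I}$ are infinitesimally free in $(\mathcal B,\varphi,\varphi')$.
   Context: Ncps of type B$'$ $(\mathcal A,\varphi,\mathcal F,\Phi)$: $\mathcal A$ unital complex algebra, $\varphi(1_{\mathcal A})=1$, $\mathcal F$ an algebra which is an $\mathcal A$-bimodule compatible with its multiplication, $\Phi:\mathcal F\to\mathbb C$ linear. $\mathcal B=\mathcal A\oplus\mathcal F$ with product $(a_1,f_1)(a_2,f_2)=(a_1a_2,a_1f_2+f_1a_2+f_1f_2)$, unit $1_{\mathcal A}$; $\varphi(a+f):=\varphi(a)$, $\varphi'(a+f):=\Phi(f)$. $(\mathcal A_i,\mathcal F_i)_{i\in I}$ is B$'$-free if: $(\mathcal A_i)$ are free w.r.t. $\varphi$ ($\varphi(c_1\cdots c_n)=0$ for alternating indices and centered $c_l\in\mathcal A_{i_l}$); with $\mathcal A_0$ the algebra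 generated by all $\mathcal A_i$ and $\mathcal F_0$ the algebra generated by all $\mathcal F_i$, $\Phi(c_0g_1c_1\cdots c_{n-1}g_nc_n)=\varphi(c_0c_n)\prod_{l=1}^{n-1}\varphi(c_l)\Phi(g_1\cdots g_n)$ for $c_l\in\mathcal A_0,g_l\in\mathcal F_0$; and $\Phi(g_1\cdots g_n)=0$ whenever $n\ge2$, $i_1\ne\cdots\ne i_n$, $g_l\in\mathcal F_{i_l}$. Infinitesimal freeness of unital subalgebras $(\mathcal B_i)$: for $i_1\ne\cdots\ne i_n$ and $b_l\in\mathcal B_{i_l}$ with $\varphi(b_l)=0$, $\varphi(b_1\cdots b_n)=0$ and $\varphi'(b_1\cdots b_n)=\varphi(b_1b_n)\varphi(b_2b_{n-1})\cdots\varphi(b_{(n-1)/2}b_{(n+3)/2})\varphi'(b_{(n+1)/2})$ if $n$ odd and $i_1=i_n,i_2=i_{n-1},\dots$, and $0$ otherwise. *)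

(* Defs.v *)
From mathcomp Require Import all_boot all_algebra.
From mathcomp Require Import reals complex.
Set Implicit Arguments. Unset Strict Implicit. Unset Printing Implicit Defensive.
Import GRing.Theory.
Local Open Scope ring_scope.

Section Defs.
Variable R : realType.
Local Notation C := (R[i]).

Definition lin_functional (V : lmodType C) (f : V -> C) : Prop :=
  forall (k : C) (x y : V), f (k *: x + y) = k * f x + f y.

(* ---------- F : a (not necessarily unital) complex algebra which is an
   A-bimodule compatible with its multiplication ---------- *)
Variable A : algType C.
Variable F : lmodType C.
Variables (fmul : F -> F -> F) (lact : A -> F -> F) (ract : F -> A -> F).

Definition bimodule_algebra : Prop :=
  (forall x y z, fmul (fmul x y) z = fmul x (fmul y z)) /\
  (forall (k : C) x y z, fmul (k *: x + y) z = k *: fmul x z + fmul y z) /\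
  (forall (k : C) x y z, fmul z (k *: x + y) = k *: fmul z x + fmul z y) /\
  (forall (k : C) (a b : A) f, lact (k *: a + b) f = k *: lact a f + lact b f) /\
  (forall (k : C) a (f g : F), lact a (k *: f + g) = k *: lact a f + lact a g) /\
  (forall (k : C) (a b : A) f, ract f (k *: a + b) = k *: ract f a + ract f b) /\
  (forall (k : C) a (f g : F), ract (k *: f + g) a = k *: ract f a + ract g a) /\
  (forall f, lact 1 f = f) /\
  (forall f, ract f 1 = f) /\
  (forall a b f, lact (a * b) f = lact a (lact b f)) /\
  (forall a b f, ract f (a * b) = ract (ract f a) b) /\
  (forall a b f, lact a (ract f b) = ract (lact a f) b) /\
  (forall a f g, lact a (fmul f g) = fmul (lact a f) g) /\
  (forall a f g, ract (fmul f g) a = fmul f (ract g a)) /\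
  (forall a f g, fmul (ract f a) g = fmul f (lact a g)).

Definition unital_subalgebra (S : A -> Prop) : Prop :=
  [/\ S 1, (forall (k : C) x y, S x -> S y -> S (k *: x + y)) &
      (forall x y, S x -> S y -> S (x * y))].

Definition subalgebraF (S : F -> Prop) : Prop :=
  [/\ S 0, (forall (k : C) x y, S x -> S y -> S (k *: x + y)) &
      (forall x y, S x -> S y -> S (fmul x y))].

Inductive genA (S : A -> Prop) : A -> Prop :=
| genA_base x : S x -> genA S x
| genA_one : genA S 1
| genA_lin (k : C) x y : genA S x -> genA S y -> genA S (k *: x + y)
| genA_mul x y : genA S x -> genA S y -> genA S (x * y).

Inductive genF (S : F -> Prop) : F -> Prop :=
| genF_base x : S x -> genF S x
| genF_zero : genF S 0
| genF_lin (k : C) x y : genF S x -> genF S y -> genF S (k *: x + y)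
| genF_mul x y : genF S x -> genF S y -> genF S (fmul x y).

(* products in F : fprodF g k = g 0 g 1 ... g k  (k+1 factors) *)
Fixpoint fprodF (g : nat -> F) (k : nat) : F :=
  match k with
  | 0 => g 0%N
  | k'.+1 => fmul (fprodF g k') (g k)
  end.

(* words c_0 g_0 c_1 g_1 c_2 ... g_k c_(k+1) *)
Fixpoint wordF (c : nat -> A) (g : nat -> F) (k : nat) : F :=
  match k with
  | 0 => ract (lact (c 0%N) (g 0%N)) (c 1%N)
  | k'.+1 => fmul (wordF c g k') (ract (g k) (c k.+1))
  end.

Definition alternating (I : Type) (ind : nat -> I) (n : nat) : Prop :=
  forall l, (l.+1 < n)%N -> ind l <> ind l.+1.

Definition Bprime_free (phi : A -> C) (Phi : F -> C) (I : Type)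
    (Ai : I -> A -> Prop) (Fi : I -> F -> Prop) : Prop :=
  let A0 := genA (fun a => exists i, Ai i a) in
  let F0 := genF (fun f => exists i, Fi i f) in
  [/\
      (forall (n : nat) (ind : nat -> I) (c : nat -> A),
         (0 < n)%N -> alternating ind n ->
         (forall l, (l < n)%N -> Ai (ind l) (c l) /\ phi (c l) = 0) ->
         phi (\prod_(l < n) c l) = 0),
      (forall (n : nat) (c : nat -> A) (g : nat -> F),
         (0 < n)%N ->
         (forall l, (l <= n)%N -> A0 (c l)) ->
         (forall l, (l < n)%N -> F0 (g l)) ->
         Phi (wordF c g n.-1) =
           phi (c 0%N * c n) * (\prod_(1 <= l < n) phi (c l)) * Phi (fprodF g n.-1)) &
      (forall (n : nat) (ind : nat -> I) (g : nat -> F),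
         (2 <= n)%N -> alternating ind n ->
         (forall l, (l < n)%N -> Fi (ind l) (g l)) ->
         Phi (fprodF g n.-1) = 0)].

Definition Btype : Type := (A * F)%type.
Definition badd (x y : Btype) : Btype := (x.1 + y.1, x.2 + y.2).
Definition bscale (k : C) (x : Btype) : Btype := (k *: x.1, k *: x.2).
Definition bmul (x y : Btype) : Btype :=
  (x.1 * y.1, lact x.1 y.2 + ract x.2 y.1 + fmul x.2 y.2).
Definition bone : Btype := (1, 0).
Definition bprod (b : nat -> Btype) (n : nat) : Btype :=
  foldr (fun l acc => bmul (b l) acc) bone (iota 0 n).

Definition phiB (phi : A -> C) (x : Btype) : C := phi x.1.
Definition phi'B (Phi : F -> C) (x : Btype) : C := Phi x.2.

Inductive genB (S : Btype -> Prop) : Btype -> Prop :=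
| genB_base x : S x -> genB S x
| genB_one : genB S bone
| genB_lin (k : C) x y : genB S x -> genB S y -> genB S (badd (bscale k x) y)
| genB_mul x y : genB S x -> genB S y -> genB S (bmul x y).

Definition Bsub (Ai : A -> Prop) (Fi : F -> Prop) : Btype -> Prop :=
  genB (fun x => (Ai x.1 /\ x.2 = 0) \/ (exists k : C, x.1 = k%:A /\ Fi x.2)).

Definition inf_free (phi : A -> C) (Phi : F -> C) (I : Type)
    (Bi : I -> Btype -> Prop) : Prop :=
  forall (n : nat) (ind : nat -> I) (b : nat -> Btype),
    (0 < n)%N -> alternating ind n ->
    (forall l, (l < n)%N -> Bi (ind l) (b l) /\ phiB phi (b l) = 0) ->
    let sym := odd n /\ (forall l, (l < n)%N -> ind l = ind (n.-1 - l)%N) in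
    [/\ phiB phi (bprod b n) = 0,
        sym -> phi'B Phi (bprod b n) =
               (\prod_(l < n./2) phiB phi (bmul (b l) (b (n.-1 - l)%N)))
               * phi'B Phi (b n./2) &
        ~ sym -> phi'B Phi (bprod b n) = 0].

End Defs.

(* Main.v *)
Require Import Defs.
From mathcomp Require Import all_boot all_algebra.
From mathcomp Require Import reals complex.
From Stdlib Require Import Classical.
From mathcomp Require Import zify.
Import GRing.Theory.
Local Open Scope ring_scope.
Set Implicit Arguments. Unset Strict Implicit. Unset Printing Implicit Defensive.

Ltac sg := match goal with |- ?G => idtac G end.

Section Main.
Variable R : realType.
Local Notation C := (R[i]).
Variable A : algType C.
Variable F : lmodType C.
Variables (fmul : F -> F -> F) (lact : A -> F -> F) (ract : F -> A -> F).
Variables (phi : A -> C) (Phi : F -> C).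
Variables (I : Type) (Ai : I -> A -> Prop) (Fi : I -> F -> Prop).

Hypothesis Hphi : lin_functional phi.
Hypothesis Hphi1 : phi 1 = 1.
Hypothesis HPhi : lin_functional Phi.
Hypothesis fassoc : forall x y z, fmul (fmul x y) z = fmul x (fmul y z).
Hypothesis fmulDl : forall (k : C) x y z, fmul (k *: x + y) z = k *: fmul x z + fmul y z.
Hypothesis fmulDr : forall (k : C) x y z, fmul z (k *: x + y) = k *: fmul z x + fmul z y.
Hypothesis lactDl : forall (k : C) (a b : A) f, lact (k *: a + b) f = k *: lact a f + lact b f.
Hypothesis lactDr : forall (k : C) a (f g : F), lact a (k *: f + g) = k *: lact a f + lact a g.
Hypothesis ractDr : forall (k : C) (a b : A) f, ract f (k *: a + b) = k *: ract f a + ract f b.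
Hypothesis ractDl : forall (k : C) a (f g : F), ract (k *: f + g) a = k *: ract f a + ract g a.
Hypothesis lact1 : forall f, lact 1 f = f.
Hypothesis ract1 : forall f, ract f 1 = f.
Hypothesis lactM : forall a b f, lact (a * b) f = lact a (lact b f).
Hypothesis ractM : forall a b f, ract f (a * b) = ract (ract f a) b.
Hypothesis lactract : forall a b f, lact a (ract f b) = ract (lact a f) b.
Hypothesis lactfmul : forall a f g, lact a (fmul f g) = fmul (lact a f) g.
Hypothesis ractfmul : forall a f g, ract (fmul f g) a = fmul f (ract g a).
Hypothesis fmulract : forall a f g, fmul (ract f a) g = fmul f (lact a g).
Hypothesis HAi : forall i, unital_subalgebra (Ai i).
Hypothesis HFi : forall i, subalgebraF fmul (Fi i).

Definition A0 := genA (fun a => exists i, Ai i a).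
Definition F0 := genF fmul (fun f => exists i, Fi i f).

Hypothesis Hfree1 : forall (n : nat) (ind : nat -> I) (c : nat -> A),
         (0 < n)%N -> alternating ind n ->
         (forall l, (l < n)%N -> Ai (ind l) (c l) /\ phi (c l) = 0) ->
         phi (\prod_(l < n) c l) = 0.
Hypothesis Hfree2 : forall (n : nat) (c : nat -> A) (g : nat -> F),
         (0 < n)%N ->
         (forall l, (l <= n)%N -> A0 (c l)) ->
         (forall l, (l < n)%N -> F0 (g l)) ->
         Phi (wordF fmul lact ract c g n.-1) =
           phi (c 0%N * c n) * (\prod_(1 <= l < n) phi (c l)) * Phi (fprodF fmul g n.-1).
Hypothesis Hfree3 : forall (n : nat) (ind : nat -> I) (g : nat -> F),
         (2 <= n)%N -> alternating ind n ->
         (forall l, (l < n)%N -> Fi (ind l) (g l)) ->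
         Phi (fprodF fmul g n.-1) = 0.

Lemma zero_of (V : lmodType C) (W : zmodType) (f : V -> W) :
  (forall x y : V, f (x + y) = f x + f y) -> f 0 = 0.
Proof. by move=> H; apply/(addrI (f 0)); rewrite -H !addr0. Qed.

Lemma Phi0 : Phi 0 = 0.
Proof.
apply: (@zero_of F C^o) => x y; have := HPhi 1 x y; rewrite scale1r mul1r //.
Qed.


Local Notation W := (wordF fmul lact ract).
Local Notation FP := (fprodF fmul).

Lemma phiD x y : phi (x + y) = phi x + phi y.
Proof. by have := Hphi 1 x y; rewrite scale1r mul1r. Qed.
Lemma phiZ k x : phi (k *: x) = k * phi x.
Proof. by have := Hphi k x 0; rewrite !addr0 (zero_of (f:=phi) (W:=C^o)) ?addr0 // => u v; exact: phiD. Qed.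
Lemma phi0 : phi 0 = 0.
Proof. exact: (zero_of (f:=phi) (W:=C^o)) phiD. Qed.
Lemma PhiD x y : Phi (x + y) = Phi x + Phi y.
Proof. by have := HPhi 1 x y; rewrite scale1r mul1r. Qed.
Lemma lact0 a : lact a 0 = 0.
Proof. apply: zero_of => x y; by have := lactDr 1 a x y; rewrite !scale1r. Qed.
Lemma ract0 a : ract 0 a = 0.
Proof. apply: (zero_of (f:=ract^~a)) => x y; by have := ractDl 1 a x y; rewrite !scale1r. Qed.
Lemma fmul0l x : fmul 0 x = 0.
Proof. apply: (zero_of (f:=fmul^~x)) => u v; by have := fmulDl 1 u v x; rewrite !scale1r. Qed.
Lemma fmul0r x : fmul x 0 = 0.
Proof. apply: (zero_of (f:=fmul x)) => u v; by have := fmulDr 1 u v x; rewrite !scale1r. Qed.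

Lemma Ai_lin i k x y : Ai i x -> Ai i y -> Ai i (k *: x + y).
Proof. by case: (HAi i) => _ H _; apply: H. Qed.
Lemma Ai_mul i x y : Ai i x -> Ai i y -> Ai i (x * y).
Proof. by case: (HAi i) => _ _ H; apply: H. Qed.
Lemma Ai_1 i : Ai i 1.
Proof. by case: (HAi i). Qed.
Lemma Ai_0 i : Ai i 0.
Proof. by have := Ai_lin (-1) (Ai_1 i) (Ai_1 i); rewrite scaleN1r addNr. Qed.
Lemma Ai_add i x y : Ai i x -> Ai i y -> Ai i (x + y).
Proof. by move=> hx hy; have := Ai_lin 1 hx hy; rewrite scale1r. Qed.
Lemma Ai_scal i k x : Ai i x -> Ai i (k *: x).
Proof. by move=> hx; have := Ai_lin k hx (Ai_0 i); rewrite addr0. Qed.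
Lemma Ai_cent i x : Ai i x -> Ai i (x - phi x *: 1).
Proof. by move=> hx; rewrite addrC -scaleNr; apply: Ai_lin => //; exact: Ai_1. Qed.
Lemma phi_cent x : phi (x - phi x *: 1) = 0.
Proof. by rewrite -scaleNr addrC Hphi Hphi1 mulr1 addNr. Qed.
Lemma decomp x : x = (x - phi x *: 1) + phi x *: 1.
Proof. by rewrite subrK. Qed.

Lemma A0_Ai i x : Ai i x -> A0 x.
Proof. by move=> h; apply: genA_base; exists i. Qed.
Lemma A0_mul x y : A0 x -> A0 y -> A0 (x * y).
Proof. exact: genA_mul. Qed.
Lemma A0_1 : A0 1.
Proof. exact: genA_one. Qed.
Lemma F0_Fi i x : Fi i x -> F0 x.
Proof. by move=> h; apply: genF_base; exists i. Qed.

Definition upd {T : Type} (c : nat -> T) (j : nat) (v : T) := fun l => if l == j then v else c l.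

Lemma fprodF_ext m g g' : (forall l, (l <= m)%N -> g l = g' l) -> FP g m = FP g' m.
Proof.
elim: m => [|m IH] H /=; first by rewrite H.
by rewrite IH ?H // => l hl; apply: H; apply: leqW.
Qed.

Lemma wordF_ext m c c' g g' : (forall l, (l <= m.+1)%N -> c l = c' l) ->
  (forall l, (l <= m)%N -> g l = g' l) -> W c g m = W c' g' m.
Proof.
elim: m => [|m IH] Hc Hg /=; first by rewrite !Hc ?Hg.
rewrite IH ?Hc ?Hg // => l hl; [apply: Hc|apply: Hg]; lia.
Qed.

Lemma wordF_lact a c g m : lact a (W c g m) = W (upd c 0 (a * c 0%N)) g m.
Proof.
elim: m => [|m IH] /=; first by rewrite lactract lactM.
by rewrite lactfmul IH.
Qed.

Lemma wordF_ract a c g m : ract (W c g m) a = W (upd c m.+1 (c m.+1 * a)) g m.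
Proof.
case: m => [|m] /=; first by rewrite /upd /= ractM.
rewrite ractfmul /upd eqxx -ractM; congr fmul.
by apply: wordF_ext => // l hl; case: eqP => // E; lia.
Qed.

Definition catc m (c c' : nat -> A) := fun l =>
  if (l < m.+1)%N then c l else if l == m.+1 then c m.+1 * c' 0%N else c' (l - m.+1)%N.
Definition catg {T : Type} m (g g' : nat -> T) := fun l =>
  if (l < m.+1)%N then g l else g' (l - m.+1)%N.

Lemma wordF_cat m c g m' c' g' :
  fmul (W c g m) (W c' g' m') = W (catc m c c') (catg m g g') (m.+1 + m')%N.
Proof.
elim: m' => [|m' IH].
  rewrite addn0 /=.
  have -> : W (catc m c c') (catg m g g') m = ract (W c g m) (c' 0%N).
    rewrite wordF_ract; apply: wordF_ext => l hl; rewrite /catc /upd /catg.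
      by case: ltnP => h; case: eqP => // E; lia.
    by case: ltnP => h //; lia.
  rewrite fmulract lactract /catc /catg ltnn subnn.
  have -> : (m.+2 < m.+1)%N = false by lia.
  have -> : (m.+2 == m.+1) = false by lia.
  by have -> : (m.+2 - m.+1 = 1)%N by lia.
rewrite /= -fassoc IH addnS /=; congr (fmul _ (ract _ _)).
  by rewrite /catg; case: ltnP => h; [lia| congr g'; lia].
rewrite /catc; case: ltnP => h; first lia.
by case: eqP => E; [lia| congr c'; lia].
Qed.

Definition isW (PA : A -> Prop) m (c : nat -> A) (g : nat -> F) (k : nat -> I) :=
  (forall l, (l <= m.+1)%N -> PA (c l)) /\ (forall l, (l <= m)%N -> Fi (k l) (g l)).

Lemma Phi_word m c g k : isW A0 m c g k ->
  Phi (W c g m) = phi (c 0%N * c m.+1) * (\prod_(1 <= l < m.+1) phi (c l)) * Phi (FP g m).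
Proof.
case=> Hc Hg; apply: (Hfree2 (n := m.+1)) => // l hl.
exact: (F0_Fi (Hg l hl)).
Qed.

Lemma Fi_mul i x y : Fi i x -> Fi i y -> Fi i (fmul x y).
Proof. by case: (HFi i) => _ _ H; apply: H. Qed.

Lemma fprodF_last m g x :
  FP (upd g m (fmul (g m) x)) m = fmul (FP g m) x.
Proof.
case: m => [|m] /=; first by rewrite /upd.
rewrite /upd eqxx fassoc; congr fmul.
by apply: fprodF_ext => l hl; case: eqP => // E; lia.
Qed.

Lemma reduce m g k : (forall l, (l <= m)%N -> Fi (k l) (g l)) ->
  exists m' g' k', [/\ FP g m = FP g' m', (forall l, (l <= m')%N -> Fi (k' l) (g' l)),
    alternating k' m'.+1, k' 0%N = k 0%N &
    (m' = 0%N -> forall l, (l <= m)%N -> k l = k 0%N)].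
Proof.
elim: m => [|m IH] H.
  exists 0%N, g, k; split => //.
  by move=> _ l; rewrite leqn0 => /eqP ->.
have [|m' [g' [k' [E1 E2 E3 E4 E5]]]] := IH.
  by move=> l hl; apply: H; apply: leqW.
case: (classic (k' m' = k m.+1)) => Hk.
  exists m', (upd g' m' (fmul (g' m') (g m.+1))), k'; split => //.
  - by rewrite fprodF_last /= E1.
  - move=> l hl; rewrite /upd; case: eqP => [->|_]; last exact: E2.
    apply: Fi_mul; first exact: E2.
    by rewrite Hk; apply: H.
  - move=> Hm l; rewrite leq_eqVlt => /orP [/eqP ->|hl].
      by rewrite -Hk Hm E4.
    by apply: E5.
exists m'.+1, (upd g' m'.+1 (g m.+1)), (upd k' m'.+1 (k m.+1)); split => //.
- rewrite /= E1 {2}/upd eqxx; congr fmul.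
  by apply: fprodF_ext => l hl; rewrite /upd; case: eqP => // E; lia.
- move=> l hl; rewrite /upd; case: eqP => [_|ne]; first by apply: H.
  apply: E2; lia.
- move=> l hl; rewrite /upd; case: eqP => [E|_]; first lia.
  case: eqP => [E|ne2].
    by have -> : l = m' by lia.
  by apply: E3; lia.
Qed.

Lemma Zlemma m g k : (forall l, (l <= m)%N -> Fi (k l) (g l)) ->
  (exists l, (l <= m)%N /\ k l <> k 0%N) -> Phi (FP g m) = 0.
Proof.
move=> H [l0 [hl0 hk]].
have [m' [g' [k' [E1 E2 E3 E4 E5]]]] := reduce H.
rewrite E1; case: m' E1 E2 E3 E4 E5 => [|m'] E1 E2 E3 E4 E5.
  by case: hk; apply: E5.
apply: (Hfree3 (n := m'.+2) (ind := k')) => // l hl; apply: E2; lia.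
Qed.

Lemma prod0 (N l0 : nat) (G : nat -> C) : (1 <= l0)%N -> (l0 < N)%N -> G l0 = 0 ->
  \prod_(1 <= l < N) G l = 0.
Proof.
move=> h1 h2 h3; rewrite (big_cat_nat (n := l0)) //=; last lia.
by rewrite [\prod_(l0 <= i < N) _]big_ltn // h3 mul0r mulr0.
Qed.

Lemma WZ m c g k : isW A0 m c g k ->
  ((exists l, (l <= m)%N /\ k l <> k 0%N) \/
   (exists l, [/\ (1 <= l)%N, (l <= m)%N & phi (c l) = 0])) ->
  Phi (W c g m) = 0.
Proof.
move=> Hw; rewrite (Phi_word Hw) => [[Hk|[l [h1 h2 h3]]]].
  by rewrite (Zlemma (proj2 Hw) Hk) mulr0.
by rewrite (prod0 (l0 := l)) ?mulr0 ?mul0r.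
Qed.

Inductive Span (P : F -> Prop) : F -> Prop :=
| Sp0 : Span P 0
| Spb x : P x -> Span P x
| Splin (k : C) x y : Span P x -> Span P y -> Span P (k *: x + y).

Lemma Span_add P x y : Span P x -> Span P y -> Span P (x + y).
Proof. by move=> hx hy; have := Splin 1 hx hy; rewrite scale1r. Qed.

Lemma Span_mono (P Q : F -> Prop) x : (forall y, P y -> Q y) -> Span P x -> Span Q x.
Proof.
move=> H; elim=> [|y hy|k y z _ hy _ hz]; [exact: Sp0|exact: Spb (H _ hy)|exact: Splin].
Qed.

Lemma Span_lact P a x : (forall y, P y -> P (lact a y)) -> Span P x -> Span P (lact a x).
Proof.
move=> H; elim=> [|y hy|k y z _ hy _ hz]; first by rewrite lact0; exact: Sp0.
  exact: Spb (H _ hy).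
by rewrite lactDr; apply: Splin.
Qed.

Lemma Span_ract P a x : (forall y, P y -> P (ract y a)) -> Span P x -> Span P (ract x a).
Proof.
move=> H; elim=> [|y hy|k y z _ hy _ hz]; first by rewrite ract0; exact: Sp0.
  exact: Spb (H _ hy).
by rewrite ractDl; apply: Splin.
Qed.

Lemma Span_fmul P x y : (forall u v, P u -> P v -> P (fmul u v)) ->
  Span P x -> Span P y -> Span P (fmul x y).
Proof.
move=> H hx; elim: hx y => [|u hu|k u w _ hu _ hw] y hy.
- by rewrite fmul0l; exact: Sp0.
- elim: hy => [|v hv|k v w _ hv _ hw]; first by rewrite fmul0r; exact: Sp0.
    exact: Spb (H _ _ hu hv).
  by rewrite fmulDr; apply: Splin.
- by rewrite fmulDl; apply: Splin; [apply: hu|apply: hw].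
Qed.

Lemma isW_mono (PA PB : A -> Prop) m c g k : (forall x, PA x -> PB x) ->
  isW PA m c g k -> isW PB m c g k.
Proof. by move=> H [h1 h2]; split => // l hl; apply: H; apply: h1. Qed.

Lemma isW_lact (PA : A -> Prop) a m c g k : (forall x y, PA x -> PA y -> PA (x * y)) ->
  PA a -> isW PA m c g k -> isW PA m (upd c 0 (a * c 0%N)) g k.
Proof.
move=> HM ha [h1 h2]; split => // l hl; rewrite /upd; case: eqP => _; last exact: h1.
by apply: HM => //; apply: h1.
Qed.

Lemma isW_ract (PA : A -> Prop) a m c g k : (forall x y, PA x -> PA y -> PA (x * y)) ->
  PA a -> isW PA m c g k -> isW PA m (upd c m.+1 (c m.+1 * a)) g k.
Proof.
move=> HM ha [h1 h2]; split => // l hl; rewrite /upd; case: eqP => _; last exact: h1.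
by apply: HM => //; apply: h1.
Qed.

Lemma isW_cat (PA : A -> Prop) m c g k m' c' g' k' :
  (forall x y, PA x -> PA y -> PA (x * y)) ->
  isW PA m c g k -> isW PA m' c' g' k' ->
  isW PA (m.+1 + m') (catc m c c') (catg m g g') (catg m k k').
Proof.
move=> HM [h1 h2] [h1' h2']; split => l hl; rewrite /catc /catg; case: ltnP => h.
- by apply: h1; lia.
- case: eqP => _; first by apply: HM; [apply: h1|apply: h1'].
  by apply: h1'; lia.
- by apply: h2; lia.
- by apply: h2'; lia.
Qed.

Definition iword i f := exists m c g, f = W c g m /\ isW (Ai i) m c g (fun _ => i).
Definition gword f := exists m c g k, f = W c g m /\ isW A0 m c g k.
Definition jword j f := exists m c g k,
  [/\ f = W c g m, isW A0 m c g k, k 0%N = j & Ai j (c 0%N)].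

Lemma iword_lact i a f : Ai i a -> iword i f -> iword i (lact a f).
Proof.
move=> ha [m [c [g [-> hw]]]]; exists m, (upd c 0 (a * c 0%N)), g; split.
  exact: wordF_lact.
by apply: isW_lact => //; exact: Ai_mul.
Qed.

Lemma iword_ract i a f : Ai i a -> iword i f -> iword i (ract f a).
Proof.
move=> ha [m [c [g [-> hw]]]]; exists m, (upd c m.+1 (c m.+1 * a)), g; split.
  exact: wordF_ract.
by apply: isW_ract => //; exact: Ai_mul.
Qed.

Lemma iword_fmul i f f' : iword i f -> iword i f' -> iword i (fmul f f').
Proof.
move=> [m [c [g [-> hw]]]] [m' [c' [g' [-> hw']]]].
exists (m.+1 + m')%N, (catc m c c'), (catg m g g'); split; first exact: wordF_cat.
have := isW_cat (@Ai_mul i) hw hw'.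
by case=> h1 h2; split => // l hl; have := h2 l hl; rewrite /catg; case: ltnP.
Qed.

Lemma gword_lact a f : A0 a -> gword f -> gword (lact a f).
Proof.
move=> ha [m [c [g [k [-> hw]]]]]; exists m, (upd c 0 (a * c 0%N)), g, k; split.
  exact: wordF_lact.
by apply: isW_lact => //; exact: A0_mul.
Qed.

Lemma gword_ract a f : A0 a -> gword f -> gword (ract f a).
Proof.
move=> ha [m [c [g [k [-> hw]]]]]; exists m, (upd c m.+1 (c m.+1 * a)), g, k; split.
  exact: wordF_ract.
by apply: isW_ract => //; exact: A0_mul.
Qed.

Lemma gword_fmul f f' : gword f -> gword f' -> gword (fmul f f').
Proof.
move=> [m [c [g [k [-> hw]]]]] [m' [c' [g' [k' [-> hw']]]]].
exists (m.+1 + m')%N, (catc m c c'), (catg m g g'), (catg m k k'); split.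
  exact: wordF_cat.
exact: isW_cat A0_mul hw hw'.
Qed.

Lemma iword_gword i f : iword i f -> gword f.
Proof.
move=> [m [c [g [-> hw]]]]; exists m, c, g, (fun _ => i); split => //.
by apply: isW_mono hw => x; exact: A0_Ai.
Qed.

Lemma Bsub_rep i x : Bsub fmul lact ract (Ai i) (Fi i) x ->
  Ai i x.1 /\ Span (iword i) x.2.
Proof.
elim=> {x} [x [[h1 h2]|[k [h1 h2]]]|||].
- by rewrite h2; split => //; exact: Sp0.
- split; first by rewrite h1; apply: Ai_scal; exact: Ai_1.
  apply: Spb; exists 0%N, (fun _ => 1), (fun _ => x.2); split.
    by rewrite /= lact1 ract1.
  by split => l _ //; exact: Ai_1.
- by split; [exact: Ai_1|exact: Sp0].
- move=> k x y _ [hx1 hx2] _ [hy1 hy2]; split; first exact: Ai_lin.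
  exact: Splin.
- move=> x y _ [hx1 hx2] _ [hy1 hy2]; split; first exact: Ai_mul.
  apply: Span_add; first apply: Span_add.
  + by apply: Span_lact hy2 => f; exact: iword_lact.
  + by apply: Span_ract hx2 => f; exact: iword_ract.
  + by apply: Span_fmul hx2 hy2 => u v; exact: iword_fmul.
Qed.

Lemma split3 s t (e : nat -> A) :
  \prod_(l < s.+2 + t) e l = (\prod_(l < s) e l) * (e s * e s.+1) * \prod_(l < t) e (s.+2 + l)%N.
Proof. by rewrite big_split_ord /= !big_ord_recr /= mulrA. Qed.

Lemma split2 s t (e : nat -> A) :
  \prod_(l < s.+1 + t) e l = (\prod_(l < s) e l) * e s * \prod_(l < t) e (s.+1 + l)%N.
Proof. by rewrite big_split_ord /= !big_ord_recr. Qed.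

Lemma split1 s t (e : nat -> A) :
  \prod_(l < s + t) e l = (\prod_(l < s) e l) * \prod_(l < t) e (s + l)%N.
Proof. by rewrite big_split_ord. Qed.

Lemma G2 lo hi (e : nat -> A) (ka : nat -> I) : (lo < hi)%N ->
  (forall l, (lo <= l)%N -> (l.+1 < hi)%N -> ka l <> ka l.+1) ->
  (forall l, (lo <= l)%N -> (l < hi)%N -> Ai (ka l) (e l) /\ phi (e l) = 0) ->
  phi (\prod_(lo <= l < hi) e l) = 0.
Proof.
move=> hlt H1 H2.
have -> : \prod_(lo <= l < hi) e l = \prod_(l < hi - lo) e (l + lo)%N.
  by rewrite -{1}(add0n lo) big_addn big_mkord.
apply: (Hfree1 (n := (hi - lo)%N) (ind := fun l => ka (l + lo)%N) (c := fun l => e (l + lo)%N)); first lia.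
  by move=> l hl; rewrite addSn; apply: H1; lia.
by move=> l hl; apply: H2; lia.
Qed.

Lemma G1 n (e : nat -> A) (ka : nat -> I) : (0 < n)%N ->
  (forall l, (l.+1 < n)%N -> ka l <> ka l.+1) ->
  (forall l, (l < n)%N -> Ai (ka l) (e l) /\ phi (e l) = 0) ->
  phi (\prod_(l < n) e l) = 0.
Proof. by move=> h H1 H2; apply: (Hfree1 (n := n) (ind := ka) (c := e)). Qed.

Lemma phi_split P1 y P2 :
  phi (P1 * y * P2) = phi (P1 * (y - phi y *: 1) * P2) + phi y * phi (P1 * P2).
Proof.
rewrite {1}(decomp y) mulrDr mulrDl phiD; congr (_ + _).
by rewrite -scalerAr mulr1 -scalerAl phiZ.
Qed.

Lemma F3 s : forall t (e : nat -> A) (ka : nat -> I),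
  (forall l, (l < s + t)%N -> Ai (ka l) (e l) /\ phi (e l) = 0) ->
  (forall l, (l.+1 < s)%N -> ka l <> ka l.+1) ->
  (forall l, (s <= l)%N -> (l.+1 < s + t)%N -> ka l <> ka l.+1) ->
  ((s = t /\ forall l, (l < s)%N -> ka l = ka (s + s - 1 - l)%N) ->
     phi (\prod_(l < s + t) e l) = \prod_(l < s) phi (e l * e (s + s - 1 - l)%N)) /\
  (~ (s = t /\ forall l, (l < s)%N -> ka l = ka (s + s - 1 - l)%N) ->
     phi (\prod_(l < s + t) e l) = 0).
Proof.
elim: s => [|s IH] [|t] e ka H1 H2 H3.
- by rewrite !big_ord0 Hphi1; split => // [[]]; split.
- have Z : phi (\prod_(l < 0 + t.+1) e l) = 0.
    apply: (G1 (ka := ka)) => [//|l hl|l hl]; [apply: H3 => //|apply: H1; lia].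
  by split => // [[]].
- have Z : phi (\prod_(l < s.+1 + 0) e l) = 0.
    apply: (G1 (ka := ka)) => [|l hl|l hl]; [lia|apply: H2; lia|apply: H1; lia].
  by split => // [[]].
case: (classic (ka s = ka s.+1)) => Hk; last first.
  have Z : phi (\prod_(l < s.+1 + t.+1) e l) = 0.
    apply: (G1 (ka := ka)) => [|l hl|l hl]; [lia| |apply: H1; lia].
    case: (ltngtP l s) => h.
    - by apply: H2.
    - by apply: H3 => //; lia.
    - by rewrite h.
  split => // [[_ Hs]]; case: Hk; rewrite (Hs s) //; congr ka; lia.
have -> : (s.+1 + t.+1 = s.+2 + t)%N by lia.
rewrite split3 phi_split.
set y := e s * e s.+1.
have Hy : Ai (ka s) y.
  apply: Ai_mul; first by apply: (proj1 (H1 _ _)); lia.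
  by rewrite Hk; apply: (proj1 (H1 _ _)); lia.
have Z : phi (\prod_(l < s) e l * (y - phi y *: 1) * \prod_(l < t) e (s.+2 + l)%N) = 0.
  pose e' l := if (l < s)%N then e l else if l == s then y - phi y *: 1 else e l.+1.
  pose k' l := if (l <= s)%N then ka l else ka l.+1.
  have <- : \prod_(l < s.+1 + t) e' l = \prod_(l < s) e l * (y - phi y *: 1) * \prod_(l < t) e (s.+2 + l)%N.
    rewrite split2; congr (_ * _ * _).
    - by apply: eq_bigr => l _; rewrite /e' ltn_ord.
    - by rewrite /e' ltnn eqxx.
    - apply: eq_bigr => l _; rewrite /e'; case: ltnP => h; first lia.
      by case: eqP => h2; [lia|].
  apply: (G1 (ka := k')); first lia.
  - move=> l hl; rewrite /k'; case: (ltngtP l s) => h.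
    + apply: H2; lia.
    + apply: H3; lia.
    + have E : l = s by lia.
      rewrite E Hk; apply: H3; lia.
  - move=> l hl; rewrite /e' /k'; case: (ltngtP l s) => h.
    + apply: H1; lia.
    + apply: H1; lia.
    + have E : l = s by lia.
      by rewrite E; split; [exact: Ai_cent|exact: phi_cent].
rewrite Z add0r.
pose e'' l := if (l < s)%N then e l else e l.+2.
pose k'' l := if (l < s)%N then ka l else ka l.+2.
have EP : \prod_(l < s) e l * \prod_(l < t) e (s.+2 + l)%N = \prod_(l < s + t) e'' l.
  rewrite split1; congr (_ * _).
  - by apply: eq_bigr => l _; rewrite /e'' ltn_ord.
  - apply: eq_bigr => l _; rewrite /e''; case: ltnP => h; first lia.
    by congr e; lia.
rewrite EP.
have IHa : forall l, (l < s + t)%N -> Ai (k'' l) (e'' l) /\ phi (e'' l) = 0.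
  by move=> l hl; rewrite /e'' /k''; case: ltnP => h; apply: H1; lia.
have IHb : forall l, (l.+1 < s)%N -> k'' l <> k'' l.+1.
  by move=> l hl; rewrite /k'' !ifT; [apply: H2; lia|lia|lia].
have IHc : forall l, (s <= l)%N -> (l.+1 < s + t)%N -> k'' l <> k'' l.+1.
  by move=> l h1 h2; rewrite /k'' !ifF; [apply: H3; lia|lia|lia].
have [IH1 IH2] := IH t e'' k'' IHa IHb IHc.
have HS : (s.+1 = t.+1 /\ forall l, (l < s.+1)%N -> ka l = ka (s.+1 + s.+1 - 1 - l)%N) <->
          (s = t /\ forall l, (l < s)%N -> k'' l = k'' (s + s - 1 - l)%N).
  split=> [[E HS]|[E HS]]; split; try lia.
  - move=> l hl; rewrite /k'' ifT // ifF; last lia.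
    rewrite HS; [congr ka|]; lia.
  - move=> l; rewrite ltnS leq_eqVlt => /orP [/eqP ->|hl].
      by rewrite Hk; congr ka; lia.
    have := HS l hl; rewrite /k'' ifT // ifF; last lia.
    by move=> ->; congr ka; lia.
split.
- move=> HS1; have HS2 := proj1 HS HS1.
  rewrite (IH1 HS2) big_ord_recr /= mulrC; congr (_ * _).
    apply: eq_bigr => l _; have hl := ltn_ord l; rewrite /e'' ltn_ord ifF; last lia.
    by congr (phi (_ * e _)); lia.
  by rewrite /y; congr (phi (_ * e _)); lia.
- move=> HS1; rewrite IH2 ?mulr0 //.
  by move=> HS2; apply: HS1; apply/HS.
Qed.

Lemma prod_shift (a : nat -> A) m n :
  \prod_(m <= l < n) a l = \prod_(l < n - m) a (m + l)%N.
Proof.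
rewrite -{1}(add0n m) big_addn big_mkord; apply: eq_bigr => l _; by rewrite addnC.
Qed.

Section Centre.
Variables (n : nat) (ind : nat -> I) (a : nat -> A).
Hypothesis Ha : forall l, (l < n)%N -> Ai (ind l) (a l) /\ phi (a l) = 0.
Hypothesis Halt : alternating ind n.

Lemma centre_term p x : (p < n)%N -> Ai (ind p) x ->
  phi (\prod_(l < p) a l * x * \prod_(p.+1 <= l < n) a l) =
  phi x * phi (\prod_(l < p) a l * \prod_(p.+1 <= l < n) a l).
Proof.
move=> hp hx; rewrite phi_split.
suff -> : phi (\prod_(l < p) a l * (x - phi x *: 1) * \prod_(p.+1 <= l < n) a l) = 0.
  by rewrite add0r.
pose e := upd a p (x - phi x *: 1).
have <- : \prod_(l < p.+1 + (n - p.+1)) e l =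
  \prod_(l < p) a l * (x - phi x *: 1) * \prod_(p.+1 <= l < n) a l.
  rewrite split2 prod_shift; congr (_ * _ * _).
  - by apply: eq_bigr => l _; rewrite /e /upd; case: eqP => h //; have := ltn_ord l; lia.
  - by rewrite /e /upd eqxx.
  - by apply: eq_bigr => l _; rewrite /e /upd; case: eqP => h //; lia.
apply: (G1 (ka := ind)); first lia.
  by move=> l hl; apply: Halt; lia.
move=> l hl; rewrite /e /upd; case: eqP => [->|_]; last by apply: Ha; lia.
by split; [exact: Ai_cent|exact: phi_cent].
Qed.

Lemma LR_F3 p : (p < n)%N ->
  ((n = (p + p).+1 /\ forall l, (l < p)%N -> ind l = ind (p + p - l)%N) ->
    phi (\prod_(l < p) a l * \prod_(p.+1 <= l < n) a l) =
    \prod_(l < p) phi (a l * a (p + p - l)%N)) /\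
  (~ (n = (p + p).+1 /\ forall l, (l < p)%N -> ind l = ind (p + p - l)%N) ->
    phi (\prod_(l < p) a l * \prod_(p.+1 <= l < n) a l) = 0).
Proof.
move=> hp.
pose e l := if (l < p)%N then a l else a l.+1.
pose k l := if (l < p)%N then ind l else ind l.+1.
have EP : \prod_(l < p + (n - p.+1)) e l = \prod_(l < p) a l * \prod_(p.+1 <= l < n) a l.
  rewrite split1 prod_shift; congr (_ * _).
  - by apply: eq_bigr => l _; rewrite /e ltn_ord.
  - by apply: eq_bigr => l _; rewrite /e ifF; [congr a; lia|lia].
have h1 : forall l, (l < p + (n - p.+1))%N -> Ai (k l) (e l) /\ phi (e l) = 0.
  by move=> l hl; rewrite /e /k; case: ltnP => h; apply: Ha; lia.
have h2 : forall l, (l.+1 < p)%N -> k l <> k l.+1.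
  by move=> l hl; rewrite /k !ifT; [apply: Halt; lia|lia|lia].
have h3 : forall l, (p <= l)%N -> (l.+1 < p + (n - p.+1))%N -> k l <> k l.+1.
  by move=> l hl1 hl2; rewrite /k !ifF; [apply: Halt; lia|lia|lia].
have [F1 F2] := @F3 p (n - p.+1)%N e k h1 h2 h3.
have HS : (n = (p + p).+1 /\ forall l, (l < p)%N -> ind l = ind (p + p - l)%N) <->
    (p = (n - p.+1)%N /\ forall l, (l < p)%N -> k l = k (p + p - 1 - l)%N).
  split=> [[E H]|[E H]]; split; try lia.
  - move=> l hl; rewrite /k ifT // ifF; last lia.
    by rewrite H //; congr ind; lia.
  - move=> l hl; have := H l hl; rewrite /k ifT // ifF; last lia.
    by move=> ->; congr ind; lia.
rewrite -EP; split.
- move=> S; rewrite (F1 (proj1 HS S)); apply: eq_bigr => l _.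
  have := ltn_ord l => hl.
  by rewrite /e ifT // ifF; [congr (phi (_ * a _)); lia|lia].
- by move=> S; apply: F2 => // S'; apply: S; apply/HS.
Qed.

Definition sym := odd n /\ forall l, (l < n)%N -> ind l = ind (n.-1 - l)%N.

Lemma LR_sym p : sym -> (p < n)%N ->
  phi (\prod_(l < p) a l * \prod_(p.+1 <= l < n) a l) =
  if p == n./2 then \prod_(l < n./2) phi (a l * a (n.-1 - l)%N) else 0.
Proof.
move=> [Hodd Hs] hp; have [F1 F2] := LR_F3 hp.
have En : n = (n./2 + n./2).+1.
  by have := odd_double_half n; rewrite Hodd -addnn; lia.
case: eqP => Ep.
  rewrite F1; last first.
    split; first by rewrite Ep.
    by move=> l hl; rewrite Hs; [congr ind|]; lia.
  by rewrite -Ep; apply: eq_bigr => l _; have := ltn_ord l => hl; congr (phi (_ * a _)); lia.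
apply: F2 => [[E _]]; apply: Ep; lia.
Qed.

Lemma LR_nsym p : ~ sym -> (p < n)%N ->
  phi (\prod_(l < p) a l * \prod_(p.+1 <= l < n) a l) = 0.
Proof.
move=> Hns hp; have [F1 F2] := LR_F3 hp.
apply: F2 => [[E H]]; apply: Hns; split.
  by rewrite E addnn /= odd_double.
move=> l hl; case: (ltngtP l p) => h.
- by rewrite H //; congr ind; lia.
- have hl' : (n.-1 - l < p)%N by lia.
  by rewrite (H _ hl'); congr ind; lia.
- by rewrite h; congr ind; lia.
Qed.
Lemma expand4 (x0 y0 M : A) (al be : C) :
  (x0 + al *: 1) * M * (y0 + be *: 1) =
  x0 * M * y0 + be *: (x0 * M) + (al *: (M * y0) + (al * be) *: M).
Proof.
rewrite !mulrDl !mulrDr -!scalerAl !mul1r -!scalerAr !mulr1 scalerA.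
by rewrite !addrA mulrC.
Qed.

Lemma F4 p q x y : (p.+1 < q)%N -> (q < n)%N -> ind p = ind q ->
  Ai (ind p) x -> Ai (ind p) y ->
  phi (x * \prod_(p.+1 <= l < q) a l * y) = 0.
Proof.
move=> hpq hq Ei hx hy.
pose x0 := x - phi x *: 1; pose y0 := y - phi y *: 1.
have -> : x = x0 + phi x *: 1 by rewrite /x0 subrK.
have -> : y = y0 + phi y *: 1 by rewrite /y0 subrK.
rewrite expand4.
pose e' l := if l == p then x0 else if l == q then y0 else a l.
have EM : \prod_(p.+1 <= l < q) a l = \prod_(p.+1 <= l < q) e' l.
  apply: eq_big_nat => l hl; rewrite /e' ifF; last lia.
  by rewrite ifF //; lia.
have He : forall l, (p <= l)%N -> (l < q.+1)%N -> Ai (ind l) (e' l) /\ phi (e' l) = 0.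
  move=> l h1 h2; rewrite /e'; case: eqP => [->|_].
    by split; [exact: Ai_cent|exact: phi_cent].
  case: eqP => [->|_].
    by split; [rewrite -Ei; exact: Ai_cent|exact: phi_cent].
  by apply: Ha; lia.
have Hk : forall l, (p <= l)%N -> (l.+1 < q.+1)%N -> ind l <> ind l.+1.
  by move=> l h1 h2; apply: Halt; lia.
have Z1 : phi (\prod_(p.+1 <= l < q) e' l) = 0.
  by apply: (G2 (ka := ind)) => [|l h1 h2|l h1 h2]; [lia|apply: Hk; lia|apply: He; lia].
have Z2 : phi (\prod_(p <= l < q) e' l) = 0.
  by apply: (G2 (ka := ind)) => [|l h1 h2|l h1 h2]; [lia|apply: Hk; lia|apply: He; lia].
have Z3 : phi (\prod_(p.+1 <= l < q.+1) e' l) = 0.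
  by apply: (G2 (ka := ind)) => [|l h1 h2|l h1 h2]; [lia|apply: Hk; lia|apply: He; lia].
have Z4 : phi (\prod_(p <= l < q.+1) e' l) = 0.
  by apply: (G2 (ka := ind)) => [|l h1 h2|l h1 h2]; [lia|apply: Hk; lia|apply: He; lia].
have Ex0 : e' p = x0 by rewrite /e' eqxx.
have Ey0 : e' q = y0 by rewrite /e' ifF ?eqxx //; lia.
have hpq1 : (p < q)%N by lia.
have hpq2 : (p.+1 <= q)%N by lia.
have hpq3 : (p < q.+1)%N by lia.
rewrite (big_ltn (m := p) hpq1) in Z2.
rewrite (big_nat_recr q (p.+1) _ hpq2) in Z3.
rewrite (big_ltn (m := p) hpq3) (big_nat_recr q (p.+1) _ hpq2) in Z4.
rewrite Ex0 Ey0 in Z2 Z3 Z4.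
rewrite EM !phiD !phiZ Z1 Z2 Z3 -mulrA Z4.
by rewrite !mulr0 !addr0.
Qed.

End Centre.

Lemma WL i j w u L M : iword i w -> jword j u -> A0 L -> A0 M ->
  (i <> j \/ (i = j /\ forall x y, Ai i x -> Ai i y -> phi (x * M * y) = 0)) ->
  Phi (lact L (fmul (ract w M) u)) = 0.
Proof.
move=> [m [c [g [-> hw]]]] [m2 [c2 [g2 [k2 [-> hu Hk2 Hc2]]]]] hL hM Hcase.
rewrite wordF_ract wordF_cat wordF_lact.
set c1 := upd c m.+1 (c m.+1 * M).
have hw1 : isW A0 m c1 g (fun _ => i).
  by apply: isW_ract => //; [exact: A0_mul|apply: isW_mono hw => x; exact: A0_Ai].
have hW := isW_lact A0_mul hL (isW_cat A0_mul hw1 hu).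
have HZ := WZ hW; apply: HZ; case: Hcase => [Hij|[Eij Hz]].
  left; exists m.+1; split; first lia.
  by rewrite /catg ltnn subnn Hk2 ltn0Sn; apply: nesym.
right; exists m.+1; split => //; first lia.
rewrite {1}/upd /= /catc ltnn eqxx /c1 /upd eqxx.
apply: Hz; first by case: hw => h1 _; apply: h1.
by rewrite Eij.
Qed.

Lemma jword_ract j w Y : iword j w -> A0 Y -> jword j (ract w Y).
Proof.
move=> [m [c [g [-> hw]]]] hY.
exists m, (upd c m.+1 (c m.+1 * Y)), g, (fun _ => j); split => //.
- exact: wordF_ract.
- by apply: isW_ract => //; [exact: A0_mul|apply: isW_mono hw => x; exact: A0_Ai].
- by rewrite /upd /=; case: hw => h1 _; apply: h1.
Qed.

Lemma jword_fmul j w v : iword j w -> gword v -> jword j (fmul w v).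
Proof.
move=> [m [c [g [-> hw]]]] [m2 [c2 [g2 [k2 [-> hv]]]]].
exists (m.+1 + m2)%N, (catc m c c2), (catg m g g2), (catg m (fun _ => j) k2); split => //.
- exact: wordF_cat.
- by apply: isW_cat A0_mul _ hv; apply: isW_mono hw => x; exact: A0_Ai.
- by rewrite /catc /=; case: hw => h1 _; apply: h1.
Qed.

Lemma Phi_lin3 L N k x y :
  Phi (lact L (fmul N (k *: x + y))) = k * Phi (lact L (fmul N x)) + Phi (lact L (fmul N y)).
Proof. by rewrite fmulDr lactDr HPhi. Qed.

Lemma lactD a x y : lact a (x + y) = lact a x + lact a y.
Proof. by have := lactDr 1 a x y; rewrite !scale1r. Qed.
Lemma fmulD x y z : fmul z (x + y) = fmul z x + fmul z y.
Proof. by have := fmulDr 1 x y z; rewrite !scale1r. Qed.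

Section Prod.
Variables (n : nat) (ind : nat -> I) (b : nat -> Btype A F).
Hypothesis Halt : alternating ind n.
Hypothesis Hb : forall l, (l < n)%N ->
  Bsub fmul lact ract (Ai (ind l)) (Fi (ind l)) (b l) /\ phiB phi (b l) = 0.

Local Notation a := (fun l => (b l).1).
Local Notation f := (fun l => (b l).2).

Lemma Ha l : (l < n)%N -> Ai (ind l) (a l) /\ phi (a l) = 0.
Proof. by move=> hl; have [h1 h2] := Hb hl; split => //; exact: (proj1 (Bsub_rep h1)). Qed.
Lemma Hf l : (l < n)%N -> Span (iword (ind l)) (f l).
Proof. by move=> hl; have [h1 h2] := Hb hl; exact: (proj2 (Bsub_rep h1)). Qed.

Definition sprod p := foldr (fun l acc => bmul fmul lact ract (b l) acc) (bone A F) (iota p (n - p)).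

Lemma sprod_n : sprod n = bone A F.
Proof. by rewrite /sprod subnn. Qed.

Lemma sprod_S p : (p < n)%N -> sprod p = bmul fmul lact ract (b p) (sprod p.+1).
Proof. by move=> hp; rewrite /sprod; have -> : (n - p = (n - p.+1).+1)%N by lia. Qed.

Lemma sprod_1 p : (sprod p).1 = \prod_(p <= l < n) a l.
Proof.
rewrite /sprod unlock /index_iota /=; elim: (iota p (n - p)) => [|l s IH] //=.
by rewrite IH.
Qed.

Lemma down_ind (Q : nat -> Prop) : Q n -> (forall p, (p < n)%N -> Q p.+1 -> Q p) ->
  forall p, (p <= n)%N -> Q p.
Proof.
move=> Hn HS p0 hp0.
suff : forall d p, (p <= n)%N -> d = (n - p)%N -> Q p by move=> /(_ _ p0 hp0 (erefl _)).
elim=> [|d IH] p hp Ed.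
  by have -> : p = n by lia.
apply: HS; first lia.
apply: IH; lia.
Qed.

Lemma sprod_gen p : (p <= n)%N -> A0 (sprod p).1 /\ Span gword (sprod p).2.
Proof.
move: p; apply: (down_ind (Q := fun p => A0 (sprod p).1 /\ Span gword (sprod p).2)).
  by rewrite sprod_n; split; [exact: A0_1|exact: Sp0].
move=> p hp [h1 h2]; rewrite sprod_S //=.
have ha : A0 (a p) by apply: (A0_Ai (proj1 (Ha hp))).
have hf : Span gword (f p) by apply: Span_mono (Hf hp) => y; exact: iword_gword.
split; first exact: A0_mul.
apply: Span_add; first apply: Span_add.
- by apply: Span_lact h2 => y; exact: gword_lact.
- by apply: Span_ract hf => y; exact: gword_ract.
- by apply: Span_fmul hf h2 => u v; exact: gword_fmul.
Qed.

Lemma A0_prod (lo hi : nat) : (hi <= n)%N -> A0 (\prod_(lo <= l < hi) a l).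
Proof.
move=> hhi; rewrite big_seq_cond; elim/big_ind: _ => //; first exact: A0_1.
  exact: A0_mul.
move=> l /andP [hl _]; rewrite mem_index_iota in hl.
by apply: (A0_Ai (proj1 (Ha (l := l) _))); lia.
Qed.

Lemma A0_prodo (p : nat) : (p <= n)%N -> A0 (\prod_(l < p) a l).
Proof. by move=> hp; rewrite -(big_mkord xpredT (fun l => (b l).1)); exact: A0_prod. Qed.

Lemma T2 p : (p < n)%N -> forall w, iword (ind p) w ->
  forall q, (p < q)%N -> (q <= n)%N ->
  Phi (lact (\prod_(l < p) a l) (fmul (ract w (\prod_(p.+1 <= l < q) a l)) (sprod q).2)) = 0.
Proof.
move=> hp w hw q hpq hq.
have hL := A0_prodo (ltnW hp).
move: q hq hpq; apply: (down_ind (Q := fun q => (p < q)%N ->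
  Phi (lact (\prod_(l < p) a l) (fmul (ract w (\prod_(p.+1 <= l < q) a l)) (sprod q).2)) = 0)).
  by move=> _; rewrite sprod_n /= fmul0r lact0 Phi0.
move=> q hq IH hpq; rewrite sprod_S //= !fmulD !lactD !PhiD.
set M := \prod_(p.+1 <= l < q) a l.
have hM : A0 M by apply: A0_prod; lia.
have [h1 h2] := sprod_gen (p := q.+1) hq.
have Hcase : ind p <> ind q \/ (ind p = ind q /\
    forall x y, Ai (ind p) x -> Ai (ind p) y -> phi (x * M * y) = 0).
  case: (classic (ind p = ind q)) => E; [right|left] => //; split => // x y hx hy.
  have hq1 : (p.+1 < q)%N.
    case: (ltngtP p.+1 q) => // Eq; first lia.
    by exfalso; apply: (Halt (l := p)); [lia|rewrite Eq].
  exact: (F4 (a := fun l => (b l).1) Ha Halt hq1 hq E hx hy).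
rewrite -fmulract -ractM.
have -> : M * a q = \prod_(p.+1 <= l < q.+1) a l by rewrite big_nat_recr //=; lia.
rewrite IH; last lia.
have Hfq := Hf hq.
have -> : Phi (lact (\prod_(l < p) a l) (fmul (ract w M) (ract (f q) (sprod q.+1).1))) = 0.
  elim: Hfq => [|y hy|k y z _ hy _ hz].
  - by rewrite ract0 fmul0r lact0 Phi0.
  - by apply: WL hw (jword_ract hy h1) hL hM Hcase.
  - by rewrite ractDl Phi_lin3 hy hz mulr0 addr0.
elim: Hfq => [|y hy|k y z _ hy _ hz].
- by rewrite fmul0l fmul0r lact0 Phi0 !addr0.
- rewrite !add0r; elim: h2 => [|v hv|k v u _ hv _ hu].
  + by rewrite fmul0r fmul0r lact0 Phi0.
  + by apply: WL hw (jword_fmul hy hv) hL hM Hcase.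
  + by rewrite fmulDr Phi_lin3 hv hu mulr0 addr0.
- move: hy hz; rewrite !add0r => hy hz.
  by rewrite fmulDl Phi_lin3 hy hz mulr0 addr0.
Qed.

Lemma T1 p gp : (p < n)%N ->
  (forall x, Ai (ind p) x ->
     phi (\prod_(l < p) a l * x * \prod_(p.+1 <= l < n) a l) = gp * phi x) ->
  forall f0, Span (iword (ind p)) f0 ->
  Phi (lact (\prod_(l < p) a l) (ract f0 (\prod_(p.+1 <= l < n) a l))) = gp * Phi f0.
Proof.
move=> hp Hg f0; elim=> [|y hy|k y z _ hy _ hz].
- by rewrite ract0 lact0 Phi0 mulr0.
- case: hy => [m [c [g [-> hw]]]].
  set L := \prod_(l < p) a l; set Rr := \prod_(p.+1 <= l < n) a l.
  have hL : A0 L by apply: A0_prodo; lia.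
  have hR : A0 Rr by apply: A0_prod.
  have hw0 : isW A0 m c g (fun _ => ind p) by apply: isW_mono hw => x; exact: A0_Ai.
  have hw' := isW_lact A0_mul hL (isW_ract A0_mul hR hw0).
  rewrite wordF_ract wordF_lact (Phi_word hw') (Phi_word hw0).
  have E0 : upd c m.+1 (c m.+1 * Rr) 0 = c 0%N by rewrite /upd.
  rewrite E0.
  have Em : upd (upd c m.+1 (c m.+1 * Rr)) 0 (L * c 0%N) m.+1 = c m.+1 * Rr.
    by rewrite /upd /= eqxx.
  rewrite Em.
  have -> : \prod_(1 <= l < m.+1) phi (upd (upd c m.+1 (c m.+1 * Rr)) 0
       (L * c 0%N) l) = \prod_(1 <= l < m.+1) phi (c l).
    apply: eq_big_nat => l hl; rewrite /upd ifF; last lia.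
    by rewrite ifF //; lia.
  have hc : Ai (ind p) (c 0%N * c m.+1) by case: hw => h1 _; apply: Ai_mul; apply: h1.
  have HG := Hg _ hc; rewrite -/L -/Rr in HG.
  have E00 : upd (upd c m.+1 (c m.+1 * Rr)) 0 (L * c 0%N) 0%N = L * c 0%N by rewrite /upd.
  rewrite E00.
  have -> : L * c 0%N * (c m.+1 * Rr) = L * (c 0%N * c m.+1) * Rr by rewrite !mulrA.
  by rewrite HG !mulrA.
- by rewrite ractDl lactDr HPhi hy hz HPhi mulrDr mulrCA.
Qed.

Lemma Esum (gam : nat -> C) :
  (forall p, (p < n)%N -> forall x, Ai (ind p) x ->
     phi (\prod_(l < p) a l * x * \prod_(p.+1 <= l < n) a l) = gam p * phi x) ->
  forall p, (p <= n)%N ->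
  Phi (lact (\prod_(l < p) a l) (sprod p).2) = \sum_(p <= q < n) gam q * Phi (f q).
Proof.
move=> Hg; apply: (down_ind (Q := fun p =>
  Phi (lact (\prod_(l < p) a l) (sprod p).2) = \sum_(p <= q < n) gam q * Phi (f q))).
  by rewrite sprod_n /= lact0 Phi0 big_geq.
move=> p hp IH; rewrite sprod_S //= !lactD !PhiD (big_ltn hp).
rewrite -lactM -(big_ord_recr p (fun l => (b l).1)) /= IH sprod_1.
rewrite (T1 hp (Hg p hp) (Hf hp)).
suff -> : Phi (lact (\prod_(l < p) a l) (fmul (f p) (sprod p.+1).2)) = 0.
  by rewrite addr0 addrC.
elim: (Hf hp) => [|y hy|k y z _ hy _ hz].
- by rewrite fmul0l lact0 Phi0.
- have := T2 hp hy (q := p.+1) (ltnSn p) hp.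
  by rewrite big_geq // ract1.
- by rewrite fmulDl lactDr HPhi hy hz mulr0 addr0.
Qed.

End Prod.

Lemma sum_pick (G : nat -> C) h N : (h < N)%N ->
  \sum_(0 <= q < N) (if q == h then G q else 0) = G h.
Proof.
move=> hN; rewrite (big_cat_nat (n := h)) //; last by apply: ltnW.
rewrite (big_ltn hN) eqxx.
rewrite big1_seq ?add0r; last first.
  by move=> q /andP [_]; rewrite mem_index_iota => hq; case: eqP => // E; lia.
rewrite big1_seq /=; first by rewrite addr0 add0r.
by move=> q; rewrite mem_index_iota => hq; case: eqP => // E; lia.
Qed.

Lemma main_inf_free : inf_free fmul lact ract phi Phi
    (fun i => Bsub fmul lact ract (Ai i) (Fi i)).
Proof.
move=> n ind b hn halt hb; cbv zeta.
have Ha' := Ha hb.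
have EB : bprod fmul lact ract b n = sprod n b 0 by rewrite /bprod /sprod subn0.
have Hsum := Esum halt hb.
have EPhi : forall gam, (forall p, (p < n)%N -> forall x, Ai (ind p) x ->
     phi (\prod_(l < p) (b l).1 * x * \prod_(p.+1 <= l < n) (b l).1) = gam p * phi x) ->
   phi'B Phi (bprod fmul lact ract b n) = \sum_(0 <= q < n) gam q * Phi (b q).2.
  move=> gam Hg; rewrite /phi'B EB -(Hsum gam Hg 0) // big_ord0 lact1 //.
split.
- rewrite /phiB EB sprod_1 big_mkord.
  exact: (G1 (n := n) (ka := ind) (e := fun l => (b l).1) hn halt Ha').
- move=> Hs.
  have Hs' : sym n ind by [].
  have En : n = (n./2 + n./2).+1.
    by have := odd_double_half n; rewrite (proj1 Hs) -addnn; lia.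
  rewrite (EPhi (fun p => if p == n./2 then
      \prod_(l < n./2) phi ((b l).1 * (b (n.-1 - l)%N).1) else 0)).
    rewrite (eq_bigr (fun q => if q == n./2 then
       \prod_(l < n./2) phi ((b l).1 * (b (n.-1 - l)%N).1) * Phi (b q).2 else 0)).
      by rewrite sum_pick //; lia.
    by move=> q _; case: eqP => _ //; rewrite mul0r.
  move=> p hp x hx.
  rewrite (centre_term Ha' halt hp hx) (LR_sym Ha' halt Hs' hp) mulrC //.
- move=> Hs.
  rewrite (EPhi (fun _ => 0)).
    by rewrite big1 // => q _; rewrite mul0r.
  move=> p hp x hx.
  by rewrite (centre_term Ha' halt hp hx) (LR_nsym Ha' halt Hs hp) mulr0 mul0r.
Qed.

End Main.

Unset Implicit Arguments.
Set Strict Implicit.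

Theorem corollary3p7 (R : realType) (A : algType R[i]) (F : lmodType R[i])
    (fmul : F -> F -> F) (lact : A -> F -> F) (ract : F -> A -> F)
    (phi : A -> R[i]) (Phi : F -> R[i])
    (I : Type) (Ai : I -> A -> Prop) (Fi : I -> F -> Prop) :
  (* (A, phi, F, Phi) is a ncps of type B' *)
  lin_functional phi -> phi 1 = 1 ->
  bimodule_algebra fmul lact ract -> lin_functional Phi ->
  (* the A_i are unital subalgebras of A, the F_i subalgebras of F *)
  (forall i, unital_subalgebra (Ai i)) ->
  (forall i, subalgebraF fmul (Fi i)) ->
  Bprime_free fmul lact ract phi Phi Ai Fi ->
  inf_free fmul lact ract phi Phi
    (fun i => Bsub fmul lact ract (Ai i) (Fi i)).
Proof.
move=> Hphi Hphi1 Hbim HPhi HAi HFi Hfree.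
case: Hbim => [a1 [a2 [a3 [a4 [a5 [a6 [a7 [a8 [a9 [a10 [a11 [a12 [a13 [a14 a15]]]]]]]]]]]]]].
cbv zeta in Hfree; case: Hfree => Hf1 Hf2 Hf3.
by apply: main_inf_free.
Qed.
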